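(* Let $\mathfrak g$ be of type $C_n$ and $J\subseteq I$. Then for $s\ge1$, $\mathbf A_{s,J}=\mathbf A^1_{s,J}\sqcup\mathbf A^2_{s,J}$ where $$\mathbf A^1_{s,J}=\{\{\beta_{i_k,j_k}\}_{1\le k\le s}\in\mathbf A^1_s:\ i_k,j_k\notin J\ \forall k\},$$ and, if $n\notin J$, $$\mathbf A^2_{s,J}=\{\{\alpha_{\ell,n}\}\cup\{\beta_{i_k,j_k}\}_{1\le k\le s-1}\in\mathbf A^2_s:\ \ell\notin J,\ \{\beta_{i_k,j_k}\}_{1\le k\le s-1}\in\mathbf A^1_{s-1,J}\},$$ while $\mathbf A^2_{s,J}=\emptyset$ if $n\in J$. Consequently $\sum_{s\ge0}\#\mathbf A_{s,J}=2^{n-\#J}$.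
   Context: Simple roots $\alpha_1,\dots,\alpha_n$ of $C_n$ numbered as in Bourbaki, $I=\{1,\dots,n\}$; $\alpha_{i,j}=\alpha_i+\dots+\alpha_j$ ($i\le j$), $\beta_{k,\ell}=\alpha_{k,n-1}+\alpha_{\ell,n}$ ($k\le\ell\le n-1$), $\theta=\beta_{1,1}$. $\mathbf A^1_s=\{\{\beta_{i_k,j_k}\}_{1\le k\le s}: i_1<\dots<i_s\le j_s<\dots<j_1\le n-1\}$, $\mathbf A^2_s=\{\{\alpha_{\ell,n}\}\cup\{\beta_{i_k,j_k}\}_{1\le k\le s-1}:\{\beta_{i_k,j_k}\}\in\mathbf A^1_{s-1},\ \ell<i_1\}$. For $\eta=\sum_i d_i(\eta)\alpha_i$, $R^+(J)=\{\alpha\in R^+:d_i(\alpha)=0\ \forall i\notin J\}$. A $J$-antichain is a subset $A\subseteq R^+$ with $A\cap R^+(J)=\emptyset$, distinct elements pairwise incomparable (order: $\lambda\le\mu$ iff $\mu-\lambda$ is a nonnegative integer combination of simple roots), and $\alpha-\alpha_j\notin R$ for $\alpha\in A$, $j\in J$. $\Phi(A)=\{\alpha\in R^+:\alpha\ge\beta$ for some $\beta\in A\}$; $A$ is abelian if $\beta_1+\beta_2\notin R$ for all $\beta_1,\beta_2\in\Phi(A)$. $\mathbf A_{s,J}$ is the set of abelian $J$-antichains with $s$ elements; $\mathbf A_{0,J}$ and $\mathbf A^1_{0,J}$ consist of the empty antichain. *)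

(* Defs.v *)
(* Root system of type C_n (Bourbaki numbering), encoded by
   coordinates in the basis of simple roots alpha_1, ..., alpha_n.
   Index o : 'I_n stands for the simple root alpha_(o+1). *)
From HB Require Import structures.
From mathcomp Require Import all_boot all_order all_algebra.
Set Implicit Arguments. Unset Strict Implicit. Unset Printing Implicit Defensive.
Import GRing.Theory.

(* Vectors of coefficients d_1,...,d_n; positive roots of C_n have all
   coefficients in {0,1,2}, so 'I_3 suffices for the ambient type. *)
Definition V (n : nat) := {ffun 'I_n -> 'I_3}.

Definition d n (v : V n) (o : 'I_n) : nat := v o.

Definition mkV n (f : nat -> nat) : V n := [ffun o : 'I_n => inord (f o.+1)].

(* alpha_{i,j} = alpha_i + ... + alpha_j   (1-based, i <= j) *)
Definition alpha n (i j : nat) : V n := mkV n (fun p => nat_of_bool (i <= p <= j)).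

(* beta_{k,l} = alpha_{k,n-1} + alpha_{l,n}   (1-based, k <= l <= n-1) *)
Definition beta n (k l : nat) : V n :=
  mkV n (fun p => nat_of_bool (k <= p <= n.-1) + nat_of_bool (l <= p <= n)).

Definition posR n : {set V n} :=
  [set v : V n | [exists i : 'I_n, exists j : 'I_n, (i <= j) && (v == alpha n i.+1 j.+1)]
              || [exists k : 'I_n, exists l : 'I_n,
                    [&& k <= l, l.+1 <= n.-1 & v == beta n k.+1 l.+1]]].

Definition inR n (w : 'I_n -> int) : bool :=
  [exists v in posR n, [forall o, w o == Posz (d v o)]
                     || [forall o, w o == (- Posz (d v o))%R]].

(* partial order: lambda <= mu iff mu - lambda is a nonneg. combination *)
Definition rle n (l m : V n) : bool := [forall o, d l o <= d m o].

Definition posRJ n (J : {set 'I_n}) : {set V n} :=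
  [set a in posR n | [forall o, (o \notin J) ==> (d a o == 0)]].

Definition J_antichain n (J : {set 'I_n}) (A : {set V n}) : bool :=
  [&& A \subset posR n,
      [disjoint A & posRJ J],
      [forall a in A, forall b in A, (a != b) ==> ~~ rle a b] &
      [forall a in A, forall j in J,
         ~~ inR (fun o => (Posz (d a o) - Posz (nat_of_bool (o == j)))%R)]].

Definition Phi n (A : {set V n}) : {set V n} :=
  [set a in posR n | [exists b in A, rle b a]].

Definition abelian_set n (A : {set V n}) : bool :=
  [forall x in Phi A, forall y in Phi A,
     ~~ inR (fun o => (Posz (d x o) + Posz (d y o))%R)].

Definition AsJ n (J : {set 'I_n}) (s : nat) : {set {set V n}} :=
  [set A : {set V n} | [&& J_antichain J A, abelian_set A & #|A| == s]].

(* index data for {beta_{i_k,j_k}}_{1<=k<=s}: i k, j k are 0-based, so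
   i_k = (i k).+1, j_k = (j k).+1; condition
   i_1 < ... < i_s <= j_s < ... < j_1 <= n-1 *)
Definition chainOK n s (i j : {ffun 'I_s -> 'I_n}) : bool :=
  [forall k : 'I_s, forall k' : 'I_s, (k < k') ==> ((i k < i k') && (j k' < j k))]
  && [forall k : 'I_s, (i k <= j k) && ((j k).+1 <= n.-1)].

Definition betaset n s (i j : {ffun 'I_s -> 'I_n}) : {set V n} :=
  [set beta n (i k).+1 (j k).+1 | k : 'I_s].

Definition A1 n (s : nat) : {set {set V n}} :=
  [set A : {set V n} | [exists i : {ffun 'I_s -> 'I_n}, exists j : {ffun 'I_s -> 'I_n},
                          chainOK i j && (A == betaset i j)]].

Definition A2 n (s : nat) : {set {set V n}} :=
  [set A : {set V n} | [exists l : 'I_n, exists i : {ffun 'I_s.-1 -> 'I_n},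
        exists j : {ffun 'I_s.-1 -> 'I_n},
        [&& chainOK i j, [forall k, l < i k] &
            A == alpha n l.+1 n |: betaset i j]]].

Definition A1J n (J : {set 'I_n}) (s : nat) : {set {set V n}} :=
  [set A : {set V n} | [exists i : {ffun 'I_s -> 'I_n}, exists j : {ffun 'I_s -> 'I_n},
        [&& chainOK i j, [forall k, (i k \notin J) && (j k \notin J)] &
            A == betaset i j]]].

Definition A2J n (J : {set 'I_n}) (s : nat) : {set {set V n}} :=
  if [exists o in J, o.+1 == n] then set0
  else [set A in A2 n s | [exists l : 'I_n, exists B in A1J J s.-1,
                               (l \notin J) && (A == alpha n l.+1 n |: B)]].

(* Main.v *)
Require Import Defs.
From HB Require Import structures.
From mathcomp Require Import all_boot all_order all_algebra.
From Stdlib Require Import Lia.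
Set Implicit Arguments. Unset Strict Implicit. Unset Printing Implicit Defensive.
Import GRing.Theory.

Lemma zsub_eq x y z : (Posz x - Posz y = Posz z)%R -> x = (z + y)%N.
Proof. by move/eqP; rewrite subr_eq -PoszD => /eqP []. Qed.
Lemma zsub_eqN x y z : (Posz x - Posz y = - Posz z)%R -> (x + z = y)%N.
Proof. by move/eqP; rewrite subr_eq addrC -subr_eq opprK -PoszD => /eqP []. Qed.
Lemma zadd_eq x y z : (Posz x + Posz y = Posz z)%R -> (x + y = z)%N.
Proof. by rewrite -PoszD => -[]. Qed.
Lemma zadd_eqN x y z : (Posz x + Posz y = - Posz z)%R -> (x + y + z = 0)%N.
Proof. by move/eqP; rewrite -subr_eq0 opprK -!PoszD => /eqP []. Qed.
Lemma zsubI x y z : x = (z + y)%N -> (Posz x - Posz y = Posz z)%R.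
Proof. by move=> ->; rewrite PoszD addrK. Qed.

Lemma d_mkV n f (o : 'I_n) : f o.+1 <= 2 -> d (mkV n f) o = f o.+1.
Proof. by move=> h; rewrite /d /mkV ffunE inordK. Qed.

Definition r n (a b : nat) : V n := beta n a.+1 b.+1.

Lemma d_r n a b (o : 'I_n) : d (r n a b) o = ((a <= o) && (o < n.-1)) + (b <= o).
Proof.
rewrite /r /beta d_mkV; last by case: (_ && _); case: (_ && _).
by rewrite !ltnS (ltn_ord o) andbT.
Qed.

Lemma d_alpha n i j (o : 'I_n) : d (alpha n i j) o = (i <= o.+1 <= j).
Proof. by rewrite /alpha d_mkV //; case: (_ && _). Qed.

Lemma eqV n (v w : V n) : (forall o, d v o = d w o) -> v = w.
Proof. by move=> h; apply/ffunP => o; apply: val_inj; apply: h. Qed.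

Ltac tolia := repeat match goal with
  | H : is_true (_ <= _) |- _ => move/leP: H => H
  | H : is_true (_ < _) |- _ => move/ltP: H => H
  | H : is_true (_ == _) |- _ => move/eqP: H => H
  | H : is_true (~~ (_ == _)) |- _ => move/eqP: H => H
  end; repeat match goal with
  | H : context [addn _ _] |- _ => rewrite -plusE in H
  | H : context [subn _ _] |- _ => rewrite -minusE in H
  | |- context [addn _ _] => rewrite -plusE
  | |- context [subn _ _] => rewrite -minusE
  end.
Ltac nob x := lazymatch x with context [nat_of_bool _] => fail | _ => idtac end.
Ltac bsplit := repeat (match goal with
  | |- context [?x <= ?y] => nob x; nob y;
     first [ rewrite (_ : (x <= y) = true); last by apply/leP; lia
           | rewrite (_ : (x <= y) = false); last by apply/negbTE; rewrite -ltnNge; apply/ltP; lia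
           | case: (leqP x y) => ? ]
  | |- context [?x == ?y :> nat] => nob x; nob y;
     first [ rewrite (_ : (x == y) = true); last by apply/eqP; lia
           | rewrite (_ : (x == y) = false); last by apply/negbTE; apply/eqP; lia
           | case: (@eqP _ x y) => ? ]
  end; tolia; try (exfalso; lia)).
Ltac goallia := match goal with
  | |- is_true (_ <= _) => apply/leP
  | |- is_true (_ == _) => apply/eqP
  | |- _ => idtac end.
Ltac fin := bsplit; simpl; intros; tolia; try discriminate; try done; try (exfalso; lia); goallia; try lia.

Lemma alpha_r n a : a < n -> alpha n a.+1 n = r n a n.-1.
Proof.
move=> ha; apply: eqV => o; rewrite d_alpha d_r.
have := ltn_ord o; move: (nat_of_ord o) => x hx; fin.
Qed.

Lemma inRP n (w : 'I_n -> int) : inR w -> exists2 v, v \in posR n &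
  ((forall o, w o = Posz (d v o)) \/ (forall o, w o = - Posz (d v o)))%R.
Proof.
case/existsP => v /andP [hv /orP [/forallP h|/forallP h]]; exists v => //;
 [left|right] => o; apply/eqP/h.
Qed.

Lemma inRI n (w : 'I_n -> int) v : v \in posR n -> (forall o, w o = Posz (d v o)) -> inR w.
Proof.
move=> hv h; apply/existsP; exists v; rewrite hv /=; apply/orP; left.
by apply/forallP => o; rewrite h.
Qed.

Lemma posRP n v : v \in posR n ->
  (exists i j : 'I_n, i <= j /\ v = alpha n i.+1 j.+1) \/
  (exists k l : 'I_n, [/\ k <= l, l.+1 <= n.-1 & v = r n k l]).
Proof.
rewrite inE => /orP [/existsP [i /existsP [j /andP [h /eqP ->]]]|
  /existsP [k /existsP [l /and3P [h1 h2 /eqP ->]]]].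
- by left; exists i, j.
- by right; exists k, l.
Qed.

Lemma posR_alpha n i j : 0 < i <= j -> j <= n -> alpha n i j \in posR n.
Proof.
case: i => // i /andP [_ hij]; case: j hij => // j hij hj.
rewrite inE; apply/orP; left; apply/existsP; exists (@Ordinal n i (leq_ltn_trans (hij : i <= j) hj));
 apply/existsP; exists (Ordinal hj); rewrite /= eqxx andbT; exact: hij.
Qed.

Lemma posR_r n a b : a <= b -> b < n -> r n a b \in posR n.
Proof.
move=> hab hb; case: (ltnP b n.-1) => hb'.
- rewrite inE; apply/orP; right; apply/existsP; exists (Ordinal (leq_ltn_trans hab hb)).
  by apply/existsP; exists (Ordinal hb); rewrite /= hab hb' eqxx.
- have ha : a < n by apply: leq_ltn_trans hab hb.
  have -> : b = n.-1 by move: hb hb'; case: (n) => //= m h1 h2; apply/eqP; rewrite eqn_leq h2 andbT.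
  rewrite -alpha_r //; apply: posR_alpha => //.
Qed.

Lemma rle_r n a b c e : a <= b -> b < n -> c <= e -> e < n ->
  rle (r n a b) (r n c e) = (c <= a) && (e <= b).
Proof.
move=> hab hb hce he; have ha : a < n by apply: leq_ltn_trans hab hb.
apply/forallP/idP.
- move=> h; move: (h (Ordinal ha)) (h (Ordinal hb)); rewrite !d_r /=. fin.
- move=> h o; rewrite !d_r; have := ltn_ord o; move: h; fin.
Qed.

Lemma rle_refl n (v : V n) : rle v v.
Proof. by apply/forallP => o. Qed.

Lemma dlast_le1 n v (o : 'I_n) : val o = n.-1 -> v \in posR n -> d v o <= 1.
Proof.
move=> ho /posRP [[i [j [hij ->]]]|[k [l [hkl hl ->]]]];
 rewrite ?d_alpha ?d_r ho; have := ltn_ord o; rewrite ho.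
- have := ltn_ord j; fin.
- have := ltn_ord l; fin.
Qed.

Lemma PhiP n (A : {set V n}) x : x \in Phi A -> x \in posR n /\ exists2 b, b \in A & rle b x.
Proof. by rewrite inE => /andP [h /existsP [b /andP [hb hbx]]]; split => //; exists b. Qed.

Lemma AB1 n (A : {set V n}) v : A \subset posR n -> abelian_set A -> v \in A ->
  forall o : 'I_n, val o = n.-1 -> d v o = 1.
Proof.
move=> hA hab hv o ho; have hvR := subsetP hA v hv.
case: (posRP hvR) => [[i [j [hij ev]]]|[k [l [hkl hl ->]]]]; last first.
  by rewrite d_r ho; have:= ltn_ord o; rewrite ho; have := ltn_ord l; fin.
case: (ltnP j n.-1) => hj; last first.
  by rewrite ev d_alpha ho; have := ltn_ord o; rewrite ho; have := ltn_ord j; fin.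
exfalso; set y := r n i j.+1.
have hjn : j.+1 < n by move: hj (ltn_ord o); rewrite ho; fin.
have hyR : y \in posR n by apply: posR_r => //; apply: leq_trans hij (leqnSn j).
have hvP : v \in Phi A.
  by rewrite inE hvR /=; apply/existsP; exists v; rewrite hv rle_refl.
have hyP : y \in Phi A.
  rewrite inE hyR /=; apply/existsP; exists v; rewrite hv /=.
  apply/forallP => o'; rewrite ev d_alpha d_r; have := ltn_ord o'; fin.
move: hab => /forallP /(_ v) /implyP /(_ hvP) /forallP /(_ y) /implyP /(_ hyP) /negP; apply.
apply: (inRI (v := r n i i)); first by apply: posR_r.
move=> o'; rewrite -PoszD ev d_alpha !d_r; congr Posz; have := ltn_ord o'; fin.
Qed.

Lemma AB2 n (A : {set V n}) : 0 < n ->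
  (forall v, v \in A -> v \in posR n /\ forall o : 'I_n, val o = n.-1 -> d v o = 1) ->
  abelian_set A.
Proof.
move=> hn hA; have hl : n.-1 < n by rewrite ltn_predL.
set o := Ordinal hl.
have key : forall x, x \in Phi A -> 1 <= d x o.
  move=> x /PhiP [_ [b hb /forallP /(_ o)]]; rewrite (proj2 (hA b hb)) //.
apply/forallP => x; apply/implyP => hx; apply/forallP => y; apply/implyP => hy.
apply/negP => /inRP [u hu [h|h]].
- have := zadd_eq (h o); have := dlast_le1 (erefl _ : val o = n.-1) hu.
  have := key x hx; have := key y hy; fin.
- have := zadd_eqN (h o); have := key x hx; fin.
Qed.

Lemma oeq n (x y : 'I_n) : (x == y) = (nat_of_ord x == nat_of_ord y).
Proof. by []. Qed.

Lemma notR_sub n (a b j : 'I_n) : a <= b -> (j : nat) != a -> (j : nat) != b ->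
  ~~ inR (fun o : 'I_n => Posz (d (r n a b) o) - Posz (o == j))%R.
Proof.
move=> hab hja hjb; apply/negP => /inRP [u hu [h|h]]; last first.
  have := zsub_eqN (h a); rewrite oeq d_r; have := ltn_ord a; have := ltn_ord b.
  by move: hab hja; fin.
have hl : n.-1 < n by rewrite ltn_predL; apply: leq_ltn_trans (ltn_ord a).
have e1 := zsub_eq (h a); have e2 := zsub_eq (h b); have e3 := zsub_eq (h j).
have e4 := zsub_eq (h (Ordinal hl)).
move: e1 e2 e3 e4; rewrite !oeq /= !eqxx.
have ha := ltn_ord a; have hb := ltn_ord b; have hj := ltn_ord j.
move/eqP: hja => hja; move/eqP: hjb => hjb.
case: (ltnP j a) => hja'.
  by move=> _ _ + _; rewrite !d_r; fin.
case: (ltnP j b) => hjb'.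
  move=> + _ + +; rewrite !d_r /=.
  case: (posRP hu) => [[i [i' [hii ->]]]|[k [l [hkl hl' ->]]]]; rewrite ?d_alpha ?d_r /=.
  + have := ltn_ord i; have := ltn_ord i'; move: hii; fin.
  + have := ltn_ord k; have := ltn_ord l; move: hkl hl'; fin.
case: (ltnP j n.-1) => hjn.
  move=> _ + + _; rewrite !d_r /=.
  case: (posRP hu) => [[i [i' [hii ->]]]|[k [l [hkl hl' ->]]]]; rewrite ?d_alpha ?d_r /=.
  + have := ltn_ord i; have := ltn_ord i'; move: hii; fin.
  + have := ltn_ord k; have := ltn_ord l; move: hkl hl'; fin.
move=> _ + _ +; rewrite !d_r /=.
case: (posRP hu) => [[i [i' [hii ->]]]|[k [l [hkl hl' ->]]]]; rewrite ?d_alpha ?d_r /=.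
+ have := ltn_ord i; have := ltn_ord i'; move: hii; fin.
+ have := ltn_ord k; have := ltn_ord l; move: hkl hl'; fin.
Qed.



Lemma Jnec n (J : {set 'I_n}) (a b : 'I_n) : a <= b -> r n a b \notin posRJ J ->
  (forall j, j \in J -> ~~ inR (fun o : 'I_n => Posz (d (r n a b) o) - Posz (o == j))%R) ->
  a \notin J /\ b \notin J.
Proof.
move=> hab hRJ hJ; have ha := ltn_ord a; have hb := ltn_ord b.
have hA : a \notin J.
  apply/negP => haJ; move: (hJ a haJ) => /negP; apply.
  case: (ltnP a n.-1) => han.
  - case: (ltnP a b) => hab'.
    + apply: (inRI (v := r n a.+1 b)); first by apply: posR_r.
      move=> o; apply: zsubI; rewrite oeq !d_r; have := ltn_ord o; move: hab hab'; fin.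
    + apply: (inRI (v := r n a a.+1)).
        by apply: posR_r => //; move: han ha; fin.
      move=> o; apply: zsubI; rewrite oeq !d_r; have := ltn_ord o; move: hab hab' han; fin.
  - move/negP: hRJ; case; rewrite inE posR_r //=; apply/forallP => o; apply/implyP => hoJ.
    have hoa : o != a by apply: contraNneq hoJ => ->.
    rewrite d_r; move: hoa; rewrite oeq; have := ltn_ord o; move: hab han; fin.
split => //; apply/negP => hbJ; move: (hJ b hbJ) => /negP; apply.
have hab' : a < b.
  have : a != b by apply: contraNneq hA => ->.
  by rewrite oeq ltn_neqAle hab andbT.
case: (ltnP b n.-1) => hbn.
- apply: (inRI (v := r n a b.+1)); first by apply: posR_r; move: hab hbn hb; fin.
  move=> o; apply: zsubI; rewrite oeq !d_r; have := ltn_ord o; move: hab hab' hbn; fin.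
- apply: (inRI (v := alpha n a.+1 n.-1)).
    by apply: posR_alpha; [move: hab' hbn hb; fin | apply: leq_pred].
  move=> o; apply: zsubI; rewrite oeq d_r d_alpha; have := ltn_ord o; move: hab hab' hbn; fin.
Qed.

Lemma Jsuff n (J : {set 'I_n}) (a b : 'I_n) : a <= b -> a \notin J -> b \notin J ->
  r n a b \notin posRJ J /\
  (forall j, j \in J -> ~~ inR (fun o : 'I_n => Posz (d (r n a b) o) - Posz (o == j))%R).
Proof.
move=> hab haJ hbJ; split.
- rewrite inE negb_and; apply/orP; right; apply/forallPn; exists a.
  rewrite negb_imply haJ /= d_r -lt0n; have := ltn_ord b; move: hab; fin.
- move=> j hj; apply: notR_sub => //; apply/eqP => e.
  + by move: haJ; rewrite -(ord_inj e) hj.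
  + by move: hbJ; rewrite -(ord_inj e) hj.
Qed.

Definition goodJ n (J : {set 'I_n}) (A : {set V n}) : Prop :=
  (forall v, v \in A -> exists a b : 'I_n, [/\ a <= b, a \notin J, b \notin J & v = r n a b]) /\
  (forall v w, v \in A -> w \in A -> v != w -> ~~ rle v w).

Lemma charJ n (J : {set 'I_n}) (A : {set V n}) : 0 < n ->
  (J_antichain J A && abelian_set A) <-> goodJ J A.
Proof.
move=> hn; have hl : n.-1 < n by rewrite ltn_predL.
split.
- case/andP => /and4P [hA hdis /forallP hanti /forallP hJ] hab; split; last first.
    move=> v w hv hw hvw; move: (hanti v); rewrite hv /= => /forallP /(_ w).
    by rewrite hw hvw.
  move=> v hv; have hvR := subsetP hA v hv.
  have h1 := AB1 hA hab hv (o := Ordinal hl) erefl.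
  have hvJ : v \notin posRJ J by rewrite (disjointFr hdis hv).
  have hJv : forall j, j \in J -> ~~ inR (fun o : 'I_n => Posz (d v o) - Posz (o == j))%R.
    by move=> j hj; move: (hJ v); rewrite hv /= => /forallP /(_ j); rewrite hj.
  case: (posRP hvR) => [[i [j [hij ev]]]|[k [l [hkl _ ev]]]].
  + have ej : (j : nat) = n.-1.
      by move: h1; rewrite ev d_alpha /=; have := ltn_ord j; move: hij; fin.
    have ev' : v = r n i j.
      rewrite ev ej -alpha_r; last exact: leq_ltn_trans hij (ltn_ord j).
      by congr alpha; move: hn; case: (n).
    rewrite ev' in hvJ hJv; have [hi hj] := Jnec hij hvJ hJv.
    by exists i, j.
  + rewrite ev in hvJ hJv; have [hk hl'] := Jnec hkl hvJ hJv.
    by exists k, l.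
- case=> hg hanti; apply/andP; split; last first.
    apply: AB2 => // v /hg [a [b [hab _ _ ->]]]; split; first exact: posR_r.
    move=> o ho; rewrite d_r ho; have := ltn_ord b; move: hab hn; fin.
  apply/and4P; split.
  + by apply/subsetP => v /hg [a [b [hab _ _ ->]]]; apply: posR_r.
  + apply/pred0P => v /=; apply/negbTE; apply/nandP.
    case: (boolP (v \in A)) => hv; last by left.
    right; have [a [b [hab ha hb ->]]] := hg v hv.
    by case: (Jsuff hab ha hb).
  + apply/forallP => v; apply/implyP => hv; apply/forallP => w; apply/implyP => hw.
    by apply/implyP; apply: hanti.
  + apply/forallP => v; apply/implyP => hv; apply/forallP => j; apply/implyP => hj.
    have [a [b [hab ha hb ->]]] := hg v hv.
    by case: (Jsuff hab ha hb) => _; apply.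
Qed.

Lemma sorted_enum_set n (T : {set 'I_n}) : sorted (fun x y : 'I_n => x < y) (enum T).
Proof.
rewrite /enum_mem -enumT; apply: sorted_filter; first by move=> ? ? ?; apply: ltn_trans.
have := iota_ltn_sorted 0 n; rewrite -val_enum_ord sorted_map; exact.
Qed.

Lemma r_inj n a b c e : a <= b -> b < n -> c <= e -> e < n -> r n a b = r n c e -> a = c /\ b = e.
Proof.
move=> h1 h2 h3 h4 he.
have : rle (r n a b) (r n c e) by rewrite he rle_refl.
rewrite rle_r // => /andP [x1 x2].
have : rle (r n c e) (r n a b) by rewrite he rle_refl.
rewrite rle_r // => /andP [x3 x4].
by split; apply/eqP; rewrite eqn_leq ?x1 ?x2 ?x3 ?x4.
Qed.

Lemma chain_incomp n s (i j : {ffun 'I_s -> 'I_n}) : chainOK i j ->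
  forall k k', k != k' -> ~~ rle (r n (i k) (j k)) (r n (i k') (j k')).
Proof.
case/andP => /forallP h1 /forallP h2 k k' hkk.
have [a1 a2] := andP (h2 k); have [b1 b2] := andP (h2 k').
rewrite rle_r //.
case: (ltngtP k k') => hk.
- move: (h1 k) => /forallP /(_ k') /implyP /(_ hk) /andP [c1 c2].
  by rewrite leqNgt c1.
- move: (h1 k') => /forallP /(_ k) /implyP /(_ hk) /andP [c1 c2].
  by rewrite andbC leqNgt c2.
- by move: hkk; rewrite (ord_inj hk) eqxx.
Qed.

Lemma betasetE n s (i j : {ffun 'I_s -> 'I_n}) : betaset i j = [set r n (i k) (j k) | k : 'I_s].
Proof. by []. Qed.

Lemma chain_card n s (i j : {ffun 'I_s -> 'I_n}) : chainOK i j -> #|betaset i j| = s.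
Proof.
move=> hc; rewrite betasetE card_imset ?card_ord //.
move=> k k' he; apply/eqP; apply/negPn/negP => hkk.
by have := chain_incomp hc hkk; rewrite he rle_refl.
Qed.

Lemma chain_bnd n s (i j : {ffun 'I_s -> 'I_n}) : chainOK i j ->
  forall k, i k <= j k /\ (j k).+1 <= n.-1.
Proof. by case/andP => _ /forallP h k; case/andP: (h k). Qed.

Lemma build n (J : {set 'I_n}) (B : {set V n}) s : 0 < n -> goodJ J B -> #|B| = s ->
  (forall a b : 'I_n, a <= b -> r n a b \in B -> b < n.-1) ->
  exists i j : {ffun 'I_s -> 'I_n},
    [/\ chainOK i j, (forall k, (i k \notin J) && (j k \notin J)) & B = betaset i j].
Proof.
move=> hn [hg hanti] hcard hb.
pose x0 := Ordinal hn.
have uniq_p : forall a b b' : 'I_n, a <= b -> a <= b' -> r n a b \in B -> r n a b' \in B -> b = b'.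
  move=> a b b' h1 h2 h3 h4; apply/eqP; apply/negPn/negP => hne.
  have hne' : r n a b != r n a b'.
    apply: contra hne => /eqP /(r_inj h1 (ltn_ord b) h2 (ltn_ord b')) [_ e].
    by apply/eqP/ord_inj.
  case: (leqP b b') => hbb.
  - have := hanti _ _ h4 h3; rewrite eq_sym hne' rle_r // leqnn hbb => /(_ isT).
    done.
  - have := hanti _ _ h3 h4; rewrite hne' rle_r // leqnn (ltnW hbb) => /(_ isT).
    done.
set T := [set a : 'I_n | [exists b : 'I_n, (a <= b) && (r n a b \in B)]].
pose p (a : 'I_n) := odflt x0 [pick b : 'I_n | (a <= b) && (r n a b \in B)].
have hp : forall a, a \in T -> (a <= p a) && (r n a (p a) \in B).
  move=> a; rewrite inE => /existsP [b hb0]; rewrite /p.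
  by case: pickP => [b' hb' //|/(_ b)]; rewrite hb0.
have hBT : B = [set r n a (p a) | a : 'I_n in T].
  apply/setP => v; apply/idP/imsetP.
  - move=> hv; have [a [b [hab _ _ ev]]] := hg v hv.
    have hT : a \in T by rewrite inE; apply/existsP; exists b; rewrite hab -ev hv.
    exists a => //; have /andP [h1 h2] := hp a hT.
    by rewrite ev (uniq_p a b (p a) hab h1 _ h2) // -ev.
  - by case=> a hT ->; case/andP: (hp a hT).
have hTc : #|T| = s.
  rewrite -hcard hBT card_in_imset // => a a' ha ha' he.
  have /andP [h1 _] := hp a ha; have /andP [h1' _] := hp a' ha'.
  have [e _] := r_inj h1 (ltn_ord _) h1' (ltn_ord _) he.
  exact: ord_inj.
pose i := [ffun k : 'I_s => nth x0 (enum T) k].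
pose j := [ffun k : 'I_s => p (i k)].
have hiT : forall k, i k \in T.
  by move=> k; rewrite ffunE -mem_enum mem_nth // -cardE hTc.
have hsort : forall k k' : 'I_s, k < k' -> i k < i k'.
  move=> k k' hk; rewrite !ffunE.
  apply: (sorted_ltn_nth (leT := fun x y : 'I_n => x < y)) => //.
  - by move=> ? ? ?; apply: ltn_trans.
  - exact: sorted_enum_set.
  - by rewrite inE -cardE hTc.
  - by rewrite inE -cardE hTc.
have hpj : forall k, (i k <= j k) && (r n (i k) (j k) \in B).
  by move=> k; rewrite [j k]ffunE; apply: hp.
have hc : chainOK i j.
  apply/andP; split.
  + apply/forallP => k; apply/forallP => k'; apply/implyP => hk; rewrite hsort //=.
    have /andP [h1 h2] := hpj k; have /andP [h1' h2'] := hpj k'.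
    have hne : r n (i k') (j k') != r n (i k) (j k).
      apply/negP => /eqP /(r_inj h1' (ltn_ord _) h1 (ltn_ord _)) [e _].
      by move: (hsort _ _ hk); rewrite e ltnn.
    have := hanti _ _ h2' h2 hne; rewrite rle_r // (ltnW (hsort _ _ hk)) /=.
    by rewrite -ltnNge.
  + apply/forallP => k; have /andP [h1 h2] := hpj k; rewrite h1 /=; exact: hb h1 h2.
exists i, j; split => //.
- move=> k; have /andP [h1 h2] := hpj k; have [a [b [hab ha hb' ev]]] := hg _ h2.
  have [e1 e2] := r_inj h1 (ltn_ord _) hab (ltn_ord _) ev.
  by rewrite (ord_inj e1) (ord_inj e2) ha hb'.
- apply/eqP; rewrite eq_sym eqEcard chain_card // hcard leqnn andbT.
  apply/subsetP => v /imsetP [k _ ->]; by case/andP: (hpj k).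
Qed.

Lemma ord_le_pred n (l : 'I_n) : l <= n.-1.
Proof. by case: n l => [[]//|m l] /=; rewrite -ltnS. Qed.

Lemma pred_lt n : 0 < n -> n.-1 < n.
Proof. by rewrite ltn_predL. Qed.

Definition anti n (A : {set V n}) := forall v w, v \in A -> w \in A -> v != w -> ~~ rle v w.

Lemma AsJP n (J : {set 'I_n}) A s : 0 < n -> A \in AsJ J s <-> goodJ J A /\ #|A| = s.
Proof.
move=> hn; rewrite inE; split.
- by case/and3P => h1 h2 /eqP h3; split => //; apply/charJ => //; rewrite h1 h2.
- by case=> hg hs; rewrite hs eqxx andbT; apply/charJ.
Qed.

Lemma anti_chain n s (i j : {ffun 'I_s -> 'I_n}) : chainOK i j -> anti (betaset i j).
Proof.
move=> hc v w /imsetP [k _ ->] /imsetP [k' _ ->] hne.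
apply: chain_incomp => //; apply: contra hne => /eqP ->; done.
Qed.

Lemma in_betaset n s (i j : {ffun 'I_s -> 'I_n}) (a b : 'I_n) : chainOK i j -> a <= b ->
  r n a b \in betaset i j -> exists k, a = i k /\ b = j k.
Proof.
move=> hc hab /imsetP [k _ e]; exists k.
have [h1 h2] := chain_bnd hc k.
have [e1 e2] := r_inj hab (ltn_ord _) h1 (ltn_ord _) e.
by split; apply: ord_inj.
Qed.

Lemma A1J_good n (J : {set 'I_n}) s A : A \in A1J J s ->
  [/\ goodJ J A, #|A| = s & forall a b : 'I_n, a <= b -> r n a b \in A -> b < n.-1].
Proof.
rewrite inE => /existsP [i /existsP [j /and3P [hc /forallP hJ /eqP ->]]].
split; last first.
- move=> a b hab /(in_betaset hc hab) [k [_ ->]]; exact: (proj2 (chain_bnd hc k)).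
- exact: chain_card.
- split; last exact: anti_chain.
  move=> v /imsetP [k _ ->]; exists (i k), (j k).
  by have [h1 _] := chain_bnd hc k; case/andP: (hJ k) => h2 h3; split.
Qed.

Lemma A2_data n s A : 0 < n -> 1 <= s -> A \in A2 n s ->
  exists l : 'I_n, exists i j : {ffun 'I_s.-1 -> 'I_n},
   [/\ chainOK i j, forall k, l < i k, A = r n l n.-1 |: betaset i j, anti A & #|A| = s].
Proof.
move=> hn hs; rewrite inE => /existsP [l /existsP [i /existsP [j /and3P [hc /forallP hl /eqP eA]]]].
have eA' : A = r n l n.-1 |: betaset i j by rewrite eA alpha_r.
exists l, i, j; split => //.
- rewrite eA' => v w hv hw hne; case/setU1P: hv hne => [->|hv] hne; case/setU1P: hw hne => [->|hw] hne.
  + by rewrite eqxx in hne.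
  + case/imsetP: hw => k _ ->; have [h1 h2] := chain_bnd hc k.
    rewrite rle_r ?ord_le_pred ?pred_lt //.
    by rewrite leqNgt hl.
  + case/imsetP: hv => k _ ->; have [h1 h2] := chain_bnd hc k.
    rewrite rle_r ?ord_le_pred ?pred_lt //.
    by rewrite andbC leqNgt h2.
  + exact: (anti_chain hc hv hw hne).
- have hx : r n l n.-1 \notin betaset i j.
    apply/negP => /(@in_betaset _ _ i j l (Ordinal (pred_lt hn)) hc (ord_le_pred l)) [k [_ e]].
    by have [_ h2] := chain_bnd hc k; move: h2; rewrite -e ltnn.
  by rewrite eA' cardsU1 hx chain_card // add1n prednK.
Qed.

Lemma AsJ_good n (J : {set 'I_n}) A s : 0 < n -> A \in AsJ J s -> goodJ J A /\ #|A| = s.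
Proof. by move=> hn /(AsJP J A s hn). Qed.
Lemma good_AsJ n (J : {set 'I_n}) A s : 0 < n -> goodJ J A -> #|A| = s -> A \in AsJ J s.
Proof. by move=> hn h1 h2; apply/(AsJP J A s hn). Qed.

Lemma part1 n (J : {set 'I_n}) s : 0 < n -> 1 <= s -> AsJ J s = A1J J s :|: A2J J s.
Proof.
move=> hn hs; apply/setP => A; apply/idP/idP.
- move/(AsJ_good hn) => [[hg hanti] hcard].
  case: (pickP (fun a : 'I_n => r n a n.-1 \in A)) => [l hl|hno].
  + apply/setUP; right.
    have [a [b [hab ha hb ev]]] := hg _ hl.
    have [e1 e2] := r_inj (ord_le_pred l) (pred_lt hn) hab (ltn_ord b) ev.
    set B := A :\ r n l n.-1.
    have hgB : goodJ J B.
      split; first by move=> v /setD1P [_ hv]; apply: hg.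
      by move=> v w /setD1P [_ hv] /setD1P [_ hw]; apply: hanti.
    have hcB : #|B| = s.-1 by rewrite -hcard (cardsD1 (r n l n.-1) A) hl.
    have hbB : forall a b : 'I_n, a <= b -> r n a b \in B -> b < n.-1.
      move=> a' b' hab' /setD1P [hne hv].
      rewrite ltn_neqAle ord_le_pred andbT; apply/eqP => eb.
      case: (leqP l a') => hla.
      * by move: (hanti _ _ hv hl hne); rewrite rle_r ?ord_le_pred ?pred_lt // hla eb leqnn.
      * by move: (hanti _ _ hl hv); rewrite eq_sym hne rle_r ?ord_le_pred ?pred_lt // (ltnW hla) => /(_ isT).
    have [i [j [hc hJ eB]]] := build hn hgB hcB hbB.
    have hli : forall k, l < i k.
      move=> k; have hk : r n (i k) (j k) \in B by rewrite eB; apply/imsetP; exists k.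
      case/setD1P: hk => hne hk; have [h1 h2] := chain_bnd hc k.
      move: (hanti _ _ hl hk); rewrite eq_sym hne rle_r ?ord_le_pred ?pred_lt // => /(_ isT).
      by rewrite ?andbT -ltnNge.
    have eA : A = r n l n.-1 |: B by rewrite setD1K.
    have hnJ : ~~ [exists o in J, o.+1 == n].
      apply/existsP => -[o /andP [hoJ /eqP ho]].
      have ebo : b = o by apply: ord_inj; lia.
      by move: hb; rewrite ebo hoJ.
    rewrite /A2J (negbTE hnJ) inE; apply/andP; split.
    * rewrite inE; apply/existsP; exists l; apply/existsP; exists i; apply/existsP; exists j.
      rewrite hc /=; apply/andP; split; first by apply/forallP.
      by rewrite alpha_r // eA eB.
    * apply/existsP; exists l; apply/existsP; exists B; rewrite inE.
      apply/andP; split.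
        by apply/existsP; exists i; apply/existsP; exists j; rewrite hc eB eqxx andbT; apply/forallP.
      have hlJ : l \notin J by rewrite (ord_inj e1).
      by rewrite hlJ /= alpha_r // eA.
  + apply/setUP; left.
    have hbA : forall a b : 'I_n, a <= b -> r n a b \in A -> b < n.-1.
      move=> a b hab hv; rewrite ltn_neqAle ord_le_pred andbT; apply/eqP => eb.
      by move: (hno a); rewrite /= -eb hv.
    have [i [j [hc hJ eA]]] := build hn (conj hg hanti) hcard hbA.
    rewrite inE; apply/existsP; exists i; apply/existsP; exists j.
    by rewrite hc eA eqxx andbT; apply/forallP.
- case/setUP => hA.
  + by have [hg hc hb] := A1J_good hA; apply: good_AsJ.
  + rewrite /A2J in hA; case: ifP hA => hif; first by rewrite inE.
    rewrite inE => /andP [hA2 /existsP [l /existsP [B /andP [hB /andP [hlJ /eqP eA]]]]].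
    have [l' [i [j [hc hli eA' hanti hcard]]]] := A2_data hn hs hA2.
    apply: good_AsJ => //; split => //.
    move=> v; rewrite eA => /setU1P [->|hv].
    * exists l, (Ordinal (pred_lt hn)); split => //=; first exact: ord_le_pred.
        apply/negP => h; move: hif; rewrite (_ : [exists o in J, o.+1 == n] = true) //.
        by apply/existsP; exists (Ordinal (pred_lt hn)); rewrite h /= prednK.
      by rewrite alpha_r.
    * by have [[hg _] _ _] := A1J_good hB; apply: hg.
Qed.

Lemma part1d n (J : {set 'I_n}) s : 0 < n -> [disjoint A1J J s & A2J J s].
Proof.
move=> hn; apply/pred0P => A /=; apply/negbTE; apply/nandP.
case: (boolP (A \in A1J J s)) => hA1 /=; [right|by left].
rewrite /A2J; case: ifP => _; first by rewrite inE.
rewrite inE negb_and; apply/orP; right.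
apply/negP => /existsP [l /existsP [B /andP [_ /andP [_ /eqP eA]]]].
have [_ _ hb] := A1J_good hA1.
have := hb l (Ordinal (pred_lt hn)) (ord_le_pred l).
by rewrite eA alpha_r // setU11 ltnn => /(_ isT).
Qed.

Definition phi n (A : {set V n}) : {set 'I_n} :=
  [set o : 'I_n | [exists v in A, exists c : 'I_n, exists e : 'I_n,
     [&& c <= e, v == r n c e & (o == c) || (o == e)]]].

Lemma phi_I n (A : {set V n}) v (c e : 'I_n) : v \in A -> c <= e -> v = r n c e ->
  c \in phi A /\ e \in phi A.
Proof.
move=> hv hce ev; split; rewrite inE; apply/existsP; exists v; rewrite hv /=;
 apply/existsP; exists c; apply/existsP; exists e; by rewrite hce ev !eqxx ?orbT.
Qed.

Lemma phi_E n (A : {set V n}) o : o \in phi A ->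
  exists c e : 'I_n, [/\ c <= e, r n c e \in A & o = c \/ o = e].
Proof.
rewrite inE => /existsP [v /andP [hv /existsP [c /existsP [e /and3P [hce /eqP ev ho]]]]].
exists c, e; split => //; first by rewrite -ev.
by case/orP: ho => /eqP ->; [left|right].
Qed.

Lemma minmax n (S : {set 'I_n}) x0 : x0 \in S -> exists a b : 'I_n,
  [/\ a \in S, b \in S, forall x, x \in S -> a <= x & forall x, x \in S -> x <= b].
Proof.
move=> h0.
case: (arg_minnP (fun i : 'I_n => (i : nat)) h0) => a ha hmin.
case: (arg_maxnP (fun i : 'I_n => (i : nat)) h0) => b hb hmax.
by exists a, b; split.
Qed.

Lemma peel n (J : {set 'I_n}) A (a b : 'I_n) : goodJ J A -> a \in phi A -> b \in phi A ->
  (forall x, x \in phi A -> a <= x) -> (forall x, x \in phi A -> x <= b) ->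
  [/\ a <= b, r n a b \in A, goodJ J (A :\ r n a b) & phi (A :\ r n a b) = phi A :\ a :\ b].
Proof.
move=> [hg hanti] ha hb hmin hmax.
have [e1 [hae1 he1]] : exists e1 : 'I_n, a <= e1 /\ r n a e1 \in A.
  case: (phi_E ha) => c [e [hce hv [ea|ea]]]; subst a; first by exists e.
  have [hc _] := phi_I hv hce erefl.
  have ec : c = e by apply: ord_inj; apply/eqP; rewrite eqn_leq hce hmin.
  by exists e; split => //; rewrite -{1}ec.
have [c1 [hc1b hc1]] : exists c1 : 'I_n, c1 <= b /\ r n c1 b \in A.
  case: (phi_E hb) => c [e [hce hv [eb|eb]]]; subst b; last by exists c.
  have [_ he] := phi_I hv hce erefl.
  have ee : e = c by apply: ord_inj; apply/eqP; rewrite eqn_leq hce hmax.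
  by exists c; split => //; rewrite -{2}ee.
have [_ he1p] := phi_I he1 hae1 erefl.
have [hc1p _] := phi_I hc1 hc1b erefl.
have eq1 : r n a e1 = r n c1 b.
  apply/eqP; apply/negPn/negP => hne.
  move: (hanti _ _ hc1 he1); rewrite eq_sym hne rle_r // hmin // hmax // => /(_ isT).
  done.
have [ea eb] := r_inj hae1 (ltn_ord _) hc1b (ltn_ord _) eq1.
have eb' : e1 = b by apply: ord_inj.
rewrite eb' in hae1 he1.
have hrest : forall v, v \in A -> v != r n a b -> exists c e : 'I_n,
    [/\ c <= e, v = r n c e, a < c & e < b].
  move=> v hv hne; have [c [e [hce _ _ ev]]] := hg v hv.
  have [hcp hep] := phi_I hv hce ev.
  have h1 : ~~ rle (r n a b) v by apply: hanti => //; rewrite eq_sym.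
  have h2 := hanti _ _ hv he1 hne.
  rewrite ev !rle_r // in h1 h2.
  exists c, e; split => //; have := hmin _ hcp; have := hmax _ hep; move: h1 h2; fin.
split => //.
- split; first by move=> v /setD1P [_ hv]; apply: hg.
  by move=> v w /setD1P [_ hv] /setD1P [_ hw]; apply: hanti.
- apply/setP => o; rewrite !in_setD1; apply/idP/idP.
  + move=> ho; have [c [e [hce /setD1P [hne hv] hoce]]] := phi_E ho.
    have [c' [e' [hce' ev hac heb]]] := hrest _ hv hne.
    have [ec ee] := r_inj hce (ltn_ord _) hce' (ltn_ord _) ev.
    have [hcp hep] := phi_I hv hce erefl.
    case: hoce => ->; rewrite ?hcp ?hep andbT !oeq; apply/andP; split; apply/eqP; tolia; lia.
  + case/and3P => hob hoa ho; have [c [e [hce hv hoce]]] := phi_E ho.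
    have hne : r n c e != r n a b.
      apply/negP => /eqP /(r_inj hce (ltn_ord _) hae1 (ltn_ord _)) [ec ee].
      case: hoce => eo; [move: hoa|move: hob]; rewrite eo oeq => /eqP; tolia; lia.
    have hv' : r n c e \in A :\ r n a b by rewrite in_setD1 hne hv.
    have [hcp hep] := phi_I hv' hce erefl.
    by case: hoce => ->.
Qed.

Lemma phi_sub n (J : {set 'I_n}) A : goodJ J A -> phi A \subset ~: J.
Proof.
move=> [hg _]; apply/subsetP => o /phi_E [c [e [hce hv hoce]]].
have [a [b [hab ha hb ev]]] := hg _ hv.
have [e1 e2] := r_inj hce (ltn_ord _) hab (ltn_ord _) ev.
by rewrite inE; case: hoce => ->; rewrite ?(ord_inj e1) ?(ord_inj e2).
Qed.

Lemma phi0 n (J : {set 'I_n}) A : goodJ J A -> phi A = set0 -> A = set0.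
Proof.
move=> [hg _] h0; apply/setP => v; rewrite inE; apply/negbTE/negP => hv.
have [a [b [hab _ _ ev]]] := hg _ hv; have [ha _] := phi_I hv hab ev.
by rewrite h0 inE in ha.
Qed.

Lemma card_D2 (T : finType) (S : {set T}) a b : a \in S -> #|S :\ a :\ b| < #|S|.
Proof.
move=> ha; rewrite (cardsD1 a S) ha add1n ltnS; apply: subset_leq_card; exact: subD1set.
Qed.

Lemma phi_inj n (J : {set 'I_n}) : forall m (A A' : {set V n}), #|phi A| < m ->
  goodJ J A -> goodJ J A' -> phi A = phi A' -> A = A'.
Proof.
elim => // m IH A A' hm hA hA' he.
case: (set_0Vmem (phi A)) => [h0|[x hx]].
  by rewrite (phi0 hA h0) (phi0 hA' (etrans (esym he) h0)).
have [a [b [ha hb hmin hmax]]] := minmax hx.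
have [hab h1 hg1 hp1] := peel hA ha hb hmin hmax.
have ha' : a \in phi A' by rewrite -he.
have hb' : b \in phi A' by rewrite -he.
have hmin' : forall x, x \in phi A' -> a <= x by move=> y; rewrite -he; apply: hmin.
have hmax' : forall x, x \in phi A' -> x <= b by move=> y; rewrite -he; apply: hmax.
have [_ h1' hg1' hp1'] := peel hA' ha' hb' hmin' hmax'.
have e : A :\ r n a b = A' :\ r n a b.
  apply: IH hg1 hg1' _; last by rewrite hp1 hp1' he.
  by rewrite hp1; apply: leq_trans (card_D2 _ ha) _.
by rewrite -(setD1K h1) -(setD1K h1') e.
Qed.

Lemma phi_surj n (J : {set 'I_n}) : forall m (S : {set 'I_n}), #|S| < m ->
  S \subset ~: J -> exists A, goodJ J A /\ phi A = S.
Proof.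
elim => // m IH S hm hS.
case: (set_0Vmem S) => [->|[x hx]].
  exists set0; split; first by split => v; rewrite inE.
  by apply/setP => o; rewrite in_set0; apply/negbTE/negP => /phi_E [c [e [_ h _]]]; rewrite in_set0 in h.
have [a [b [ha hb hmin hmax]]] := minmax hx.
have hab : a <= b by apply: hmin.
have [A' [[hg' ha'] hp']] := IH (S :\ a :\ b) (leq_trans (card_D2 _ ha) hm)
   (subset_trans (subset_trans (subD1set _ _) (subD1set _ _)) hS).
have hin : forall v, v \in A' -> exists c e : 'I_n, [/\ c <= e, v = r n c e, a < c & e < b].
  move=> v hv; have [c [e [hce _ _ ev]]] := hg' v hv.
  have [hc he] := phi_I hv hce ev; rewrite hp' !in_setD1 in hc he.
  case/and3P: hc => hcb hca hc; case/and3P: he => heb hea he.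
  exists c, e; split => //.
  - by rewrite ltn_neqAle eq_sym -oeq hca hmin.
  - by rewrite ltn_neqAle -oeq heb hmax.
have hJ : forall o, o \in S -> o \notin J.
  by move=> o ho; have := subsetP hS o ho; rewrite inE.
exists (r n a b |: A'); split; first split.
- move=> v /setU1P [->|hv]; last exact: hg'.
  by exists a, b; split => //; apply: hJ.
- move=> v w hv hw hne; case/setU1P: hv hne => [->|hv] hne; case/setU1P: hw hne => [->|hw] hne.
  + by rewrite eqxx in hne.
  + have [c [e [hce -> hac heb]]] := hin w hw.
    by rewrite rle_r // leqNgt hac.
  + have [c [e [hce -> hac heb]]] := hin v hv.
    by rewrite rle_r // andbC leqNgt heb.
  + exact: ha'.
- apply/setP => o; apply/idP/idP.
  + move/phi_E => [c [e [hce /setU1P [ev|hv] hoce]]].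
      have [e1 e2] := r_inj hce (ltn_ord _) hab (ltn_ord _) ev.
      by case: hoce => ->; rewrite ?(ord_inj e1) ?(ord_inj e2).
    have [hc he] := phi_I hv hce erefl; rewrite hp' !in_setD1 in hc he.
    by case: hoce => ->; [case/and3P: hc|case/and3P: he].
  + move=> ho; have hx1 : r n a b \in r n a b |: A' by apply: setU11.
    have [hpa hpb] := phi_I hx1 hab erefl.
    case: (eqVneq o a) => [->//|hoa]; case: (eqVneq o b) => [->//|hob].
    have : o \in phi A' by rewrite hp' !in_setD1 hoa hob ho.
    case/phi_E => c [e [hce hv hoce]].
    have hv' : r n c e \in r n a b |: A' by rewrite in_setU1 hv orbT.
    have [hc he] := phi_I hv' hce erefl.
    by case: hoce => ->.
Qed.

Lemma sum_partition (T : finType) (X : {set T}) (f : T -> nat) N :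
  (forall x, f x < N) -> \sum_(s < N) #|[set x in X | f x == s]| = #|X|.
Proof.
move=> hf.
have e1 : forall s : 'I_N, #|[set x in X | f x == s]| = \sum_(x : T) ((x \in X) && (f x == s) : nat).
  move=> s; rewrite -sum1_card big_mkcond /=; apply: eq_bigr => x _.
  by rewrite inE; case: (_ && _).
rewrite (eq_bigr _ (fun s _ => e1 s)) exchange_big /= -sum1_card [RHS]big_mkcond /=.
apply: eq_bigr => x _.
rewrite (bigD1 (Ordinal (hf x))) //= eqxx andbT big1 ?addn0; first by case: (x \in X).
move=> s hs; case: (x \in X) => //=; apply/eqP; rewrite eqb0.
by apply: contra hs => /eqP e; apply/eqP; apply: ord_inj.
Qed.

Lemma count_good n (J : {set 'I_n}) : 0 < n ->
  #|[set A : {set V n} | J_antichain J A && abelian_set A]| = 2 ^ (n - #|J|).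
Proof.
move=> hn; set X := [set A : {set V n} | J_antichain J A && abelian_set A].
have hX : forall A, A \in X <-> goodJ J A by move=> A; rewrite inE; apply: charJ.
have e : (@phi n) @: X = powerset (~: J).
  apply/setP => S; rewrite powersetE; apply/imsetP/idP.
  - by case=> A /hX hA ->; apply: phi_sub hA.
  - move=> hS; have [A [hA eA]] := phi_surj (ltnSn #|S|) hS.
    by exists A => //; apply/hX.
rewrite -(card_in_imset (f := @phi n)); last first.
  by move=> A A' /hX hA /hX hA' he; apply: (phi_inj (ltnSn _) hA hA' he).
rewrite e card_powerset; congr (2 ^ _).
have h := cardsC J; rewrite card_ord -plusE in h; rewrite -minusE; lia.
Qed.

Theorem mainTheorem11 (n : nat) (hn : 2 <= n) (J : {set 'I_n}) :
  (forall s : nat, 1 <= s ->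
     AsJ J s = A1J J s :|: A2J J s /\ [disjoint A1J J s & A2J J s])
  /\ \sum_(0 <= s < #|V n|.+1) #|AsJ J s| = 2 ^ (n - #|J|).
Proof.
have hn0 : 0 < n by apply: leq_trans hn.
split.
- by move=> s hs; split; [apply: part1 | apply: part1d].
- rewrite big_mkord.
  have e : forall s : 'I_#|V n|.+1, AsJ J s =
      [set A in [set A : {set V n} | J_antichain J A && abelian_set A] | #|A| == s].
    by move=> s; apply/setP => A; rewrite !inE andbA.
  under eq_bigr => s _ do rewrite e.
  rewrite (@sum_partition _ _ (fun A : {set V n} => #|A|)) ?count_good //.
  by move=> A; rewrite ltnS; apply: max_card.
Qed.
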